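(* Assume the setting described in the context, let $\gamma<\eta<\min\{\beta,\alpha\}$ with $K\,\mathrm{Lip}_u G\left(\frac{1}{\eta-\gamma}+\frac{1}{\beta-\eta}+\frac{1}{\alpha-\eta}\right)<1$, and let $M^c(\omega)=\{u_0\in H: u(\cdot,u_0,\omega)\in C_\eta\}=\{v+h^c(v,\omega):v\in H^c\}$ be the center manifold of the random equation $\frac{du}{dt}=Au+z(\theta_t\omega)u+G(\theta_t\omega,u)$. Then the random set \[ \widetilde M^c(\omega)=\{e^{z(\omega)}u: u\in M^c(\omega)\}=\{v+e^{z(\omega)}h^c(e^{-z(\omega)}v,\omega): v\in H^c\} \] is a center manifold for the stochastic evolution equation $\frac{du}{dt}=Au+F(u)+u\circ\dot W(t)$; in particular it is forward invariant under the random dynamical system $\hat u$ generated by that equation: $\hat u(t,\widetilde M^c(\omega),\omega)\subset\widetilde M^c(\theta_t\omega)$ for $t\ge0$.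
   Context: $H$ is a separable Hilbert space with norm $|\cdot|$. $A:D(A)\to H$ generates a strongly continuous semigroup $e^{At}$ satisfying an exponential trichotomy with exponents $\alpha>\gamma>0>-\gamma>-\beta$ and bound $K$: there are continuous projections $P^c,P^u,P^s$ with $P^c+P^u+P^s=\mathrm{id}$, $P^iP^j=0$ for $i\neq j$, each commuting with $e^{At}$ for $t\ge 0$; with $H^i=P^iH$, $e^{At}|_{H^i}$ is an isomorphism for $t\ge0$ (extended to $t<0$ by inversion); and $|e^{At}P^cv|\le Ke^{\gamma|t|}|P^cv|$ ($t\in\mathbb R$), $|e^{At}P^uv|\le Ke^{\alpha t}|P^uv|$ ($t\le0$), $|e^{At}P^sv|\le Ke^{-\beta t}|P^sv|$ ($t\ge0$). $F:H\to H$, $F(0)=0$, globally Lipschitz. $(\Omega,\mathcal F,\mathbb P,\{\theta_t\})$ is the Wiener shift of a two-sided scalar Wiener process $W$, restricted to a $\theta$-invariant full-measure set of paths with sublinear growth; $z(\omega)=-\mu\int_{-\infty}^0e^{\mu\tau}\omega(\tau)d\tau$ for fixed $\mu>0$, so $z(\theta_t\omega)$ is the stationary solution of $dz+\mu z\,dt=dW$. $G(\omega,u)=e^{-z(\omega)}F(e^{z(\omega)}u)$ with Lipschitz constant $\mathrm{Lip}_uG$ in $u$. $\Psi_A(t,s)=\exp[A(t-s)+\int_s^tz(\theta_r\omega)dr]$; $u(t,u_0,\omega)$ is the mild solution $u(t)=\Psi_A(t,0)u_0+\int_0^t\Psi_A(t,s)G(\theta_s\omega,u(s))ds$. $C_\eta$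 is the Banach space of $\phi\in C(\mathbb R,H)$ with $\sup_t \exp[-\eta|t|-\int_0^tz(\theta_r\omega)dr]|\phi(t)|<\infty$. The random dynamical system of the Stratonovich equation $\frac{du}{dt}=Au+F(u)+u\circ\dot W$ is $\hat u(t,v,\omega)=e^{z(\theta_t\omega)}u(t,e^{-z(\omega)}v,\omega)$. A center manifold of a random dynamical system $\phi$ is a forward invariant random set ($\phi(t,M(\omega),\omega)\subset M(\theta_t\omega)$, $t\ge0$) of the form $\{v+h(v,\omega):v\in H^c\}$ with $h(\cdot,\omega):H^c\to H^u\oplus H^s$ Lipschitz, $h(0,\omega)=0$, and $h(v,\cdot)$ measurable. *)

(* Defs.v *)
From Stdlib Require Import Reals.
From Coquelicot Require Import Coquelicot.
Open Scope R_scope.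

(* A separable Hilbert space: complete normed R-space whose norm satisfies
   the parallelogram law (Jordan-von Neumann), with a countable dense set. *)
Definition hilbert_norm {H : CompleteNormedModule R_AbsRing} : Prop :=
  forall x y : H,
    norm (plus x y) ^ 2 + norm (minus x y) ^ 2 = 2 * norm x ^ 2 + 2 * norm y ^ 2.

Definition separable (H : CompleteNormedModule R_AbsRing) : Prop :=
  exists d : nat -> H, forall (x : H) (eps : R), 0 < eps ->
    exists n, norm (minus x (d n)) < eps.

Definition bounded_linear {H : CompleteNormedModule R_AbsRing} (L : H -> H) : Prop :=
  (forall x y, L (plus x y) = plus (L x) (L y)) /\
  (forall (a : R) x, L (scal a x) = scal a (L x)) /\
  (exists C, forall x, norm (L x) <= C * norm x).

Definition C0_semigroup {H : CompleteNormedModule R_AbsRing} (S : R -> H -> H) : Prop :=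
  (forall t, 0 <= t -> bounded_linear (S t)) /\
  (forall x, S 0 x = x) /\
  (forall t s x, 0 <= t -> 0 <= s -> S (t + s) x = S t (S s x)) /\
  (forall x t, 0 <= t ->
     filterlim (fun s => S s x) (within (fun s => 0 <= s) (locally t)) (locally (S t x))).

Definition exp_trichotomy {H : CompleteNormedModule R_AbsRing} (S : R -> H -> H)
  (Pc Pu Ps : H -> H) (alpha beta gamma K : R) : Prop :=
  0 < gamma /\ gamma < alpha /\ gamma < beta /\
  bounded_linear Pc /\ bounded_linear Pu /\ bounded_linear Ps /\
  (forall x, plus (Pc x) (plus (Pu x) (Ps x)) = x) /\
  (forall x, Pc (Pu x) = zero /\ Pc (Ps x) = zero /\ Pu (Pc x) = zero /\
             Pu (Ps x) = zero /\ Ps (Pc x) = zero /\ Ps (Pu x) = zero) /\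
  (forall t x, 0 <= t ->
     S t (Pc x) = Pc (S t x) /\ S t (Pu x) = Pu (S t x) /\ S t (Ps x) = Ps (S t x)) /\
  (forall t, 0 <= t -> forall P, (P = Pc \/ P = Pu) ->
     (forall x y, P x = x -> P y = y -> S t x = S t y -> x = y) /\
     (forall y, P y = y -> exists x, P x = x /\ S t x = y)) /\
  (* |e^{At} P^c v| <= K e^{gamma |t|} |P^c v|, t in R
     (for t < 0, e^{At} on H^c is the inverse of e^{-At}) *)
  (forall t v, 0 <= t -> norm (S t (Pc v)) <= K * exp (gamma * t) * norm (Pc v)) /\
  (forall t x, 0 <= t -> Pc x = x -> norm x <= K * exp (gamma * t) * norm (S t x)) /\
  (* |e^{At} P^u v| <= K e^{alpha t} |P^u v|, t <= 0, i.e. for tau = -t >= 0,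
     |x| <= K e^{-alpha tau} |e^{A tau} x| on H^u *)
  (forall t x, 0 <= t -> Pu x = x -> norm x <= K * exp (- alpha * t) * norm (S t x)) /\
  (forall t v, 0 <= t -> norm (S t (Ps v)) <= K * exp (- beta * t) * norm (Ps v)).

(* Omega: continuous paths with omega(0)=0 and sublinear growth; this set is
   theta-invariant and of full Wiener measure. *)
Definition Omega (w : R -> R) : Prop :=
  (forall t, continuous w t) /\ w 0 = 0 /\
  filterlim (fun t => w t / t) (Rbar_locally p_infty) (locally 0) /\
  filterlim (fun t => w t / t) (Rbar_locally m_infty) (locally 0).

Definition theta (t : R) (w : R -> R) : R -> R := fun s => w (t + s) - w t.

Inductive cyl_meas : ((R -> R) -> Prop) -> Prop :=
  | cyl_gen (t : R) (B : R -> Prop) : open B -> cyl_meas (fun w => B (w t))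
  | cyl_compl (A : (R -> R) -> Prop) : cyl_meas A -> cyl_meas (fun w => ~ A w)
  | cyl_union (A : nat -> (R -> R) -> Prop) :
      (forall n, cyl_meas (A n)) -> cyl_meas (fun w => exists n, A n w).

Definition rand_measurable {H : CompleteNormedModule R_AbsRing} (f : (R -> R) -> H) : Prop :=
  forall U : H -> Prop, open U ->
    exists A, cyl_meas A /\ forall w, Omega w -> (U (f w) <-> A w).

Definition zOU (mu : R) (w : R -> R) : R :=
  - mu * RInt_gen (fun tau => exp (mu * tau) * w tau) (Rbar_locally m_infty) (at_point 0).

Definition Gfun {H : CompleteNormedModule R_AbsRing} (mu : R) (F : H -> H)
  (w : R -> R) (u : H) : H :=
  scal (exp (- zOU mu w)) (F (scal (exp (zOU mu w)) u)).

Definition PsiA {H : CompleteNormedModule R_AbsRing} (S : R -> H -> H) (mu : R)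
  (w : R -> R) (t s : R) (x : H) : H :=
  scal (exp (RInt (fun r => zOU mu (theta r w)) s t)) (S (t - s) x).

Definition is_mild_solution {H : CompleteNormedModule R_AbsRing} (S : R -> H -> H)
  (mu : R) (F : H -> H) (u : R -> H -> (R -> R) -> H) : Prop :=
  forall w u0, Omega w ->
    (forall t, 0 <= t ->
       filterlim (fun s => u s u0 w) (within (fun s => 0 <= s) (locally t))
                 (locally (u t u0 w))) /\
    (forall t, 0 <= t ->
       exists I, is_RInt (fun s => PsiA S mu w t s (Gfun mu F (theta s w) (u s u0 w))) 0 t I
              /\ u t u0 w = plus (PsiA S mu w t 0 u0) I).

Definition full_mild_traj {H : CompleteNormedModule R_AbsRing} (S : R -> H -> H)
  (mu : R) (F : H -> H) (w : R -> R) (phi : R -> H) : Prop :=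
  (forall t, continuous phi t) /\
  forall s t, s <= t ->
    exists I, is_RInt (fun r => PsiA S mu w t r (Gfun mu F (theta r w) (phi r))) s t I
           /\ phi t = plus (PsiA S mu w t s (phi s)) I.

Definition in_C_eta {H : CompleteNormedModule R_AbsRing} (mu eta : R) (w : R -> R)
  (phi : R -> H) : Prop :=
  exists C, forall t,
    exp (- eta * Rabs t - RInt (fun r => zOU mu (theta r w)) 0 t) * norm (phi t) <= C.

Definition Mc_eta {H : CompleteNormedModule R_AbsRing} (S : R -> H -> H)
  (mu : R) (F : H -> H) (eta : R) (w : R -> R) (u0 : H) : Prop :=
  exists phi : R -> H, phi 0 = u0 /\ full_mild_traj S mu F w phi /\ in_C_eta mu eta w phi.

(* RDS of the Stratonovich equation: hat u(t,v,omega) = e^{z(theta_t omega)} u(t, e^{-z(omega)} v, omega) *)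
Definition hat_u {H : CompleteNormedModule R_AbsRing} (mu : R)
  (u : R -> H -> (R -> R) -> H) (t : R) (v : H) (w : R -> R) : H :=
  scal (exp (zOU mu (theta t w))) (u t (scal (exp (- zOU mu w)) v) w).

Definition center_manifold_with {H : CompleteNormedModule R_AbsRing} (Pc : H -> H)
  (phi : R -> H -> (R -> R) -> H) (M : (R -> R) -> H -> Prop)
  (h : H -> (R -> R) -> H) : Prop :=
  (forall w, Omega w -> forall x, M w x <-> exists v, Pc v = v /\ x = plus v (h v w)) /\
  (forall w, Omega w -> forall v, Pc v = v -> Pc (h v w) = zero) /\
  (forall w, Omega w -> exists L, 0 <= L /\ forall v1 v2, Pc v1 = v1 -> Pc v2 = v2 ->
      norm (minus (h v1 w) (h v2 w)) <= L * norm (minus v1 v2)) /\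
  (forall w, Omega w -> h zero w = zero) /\
  (forall v, Pc v = v -> rand_measurable (h v)) /\
  (forall w, Omega w -> forall t, 0 <= t -> forall x, M w x -> M (theta t w) (phi t x w)).

(* Main.v *)
Require Import Defs.
From Stdlib Require Import Reals Lra Lia Classical ClassicalEpsilon.
From Coquelicot Require Import Coquelicot.
Open Scope R_scope.

Definition MS (A : (R -> R) -> Prop) : Prop :=
  exists A', cyl_meas A' /\ forall w, Omega w -> (A w <-> A' w).

Lemma MS_ext (A B : (R -> R) -> Prop) :
  (forall w, Omega w -> (A w <-> B w)) -> MS A -> MS B.
Proof.
  intros E [A' [HA HE]]. exists A'; split; auto.
  intros w Hw. rewrite <- (E w Hw). auto.
Qed.

Lemma MS_compl A : MS A -> MS (fun w => ~ A w).
Proof.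
  intros [A' [HA HE]]. exists (fun w => ~ A' w); split.
  - now apply cyl_compl.
  - intros w Hw. rewrite (HE w Hw). tauto.
Qed.

Lemma MS_union (A : nat -> (R -> R) -> Prop) :
  (forall n, MS (A n)) -> MS (fun w => exists n, A n w).
Proof.
  intros H.
  pose (B := fun n => proj1_sig (constructive_indefinite_description _ (H n))).
  assert (HB : forall n, cyl_meas (B n) /\ forall w, Omega w -> (A n w <-> B n w)).
  { intro n. unfold B. destruct (constructive_indefinite_description _ (H n)) as [b Hb].
    exact Hb. }
  exists (fun w => exists n, B n w); split.
  - apply cyl_union. intro n. apply HB.
  - intros w Hw. split; intros [n Hn]; exists n; apply (proj2 (HB n) w Hw); auto.
Qed.

Lemma MS_True : MS (fun _ => True).
Proof.
  exists (fun w => (fun _ : R => True) (w 0)). split.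
  - apply (cyl_gen 0 (fun _ => True)). apply open_true.
  - intros; tauto.
Qed.

Lemma MS_const (P : Prop) : MS (fun _ => P).
Proof.
  destruct (classic P) as [HP|HP].
  - eapply MS_ext; [|apply MS_True]. intros; tauto.
  - eapply MS_ext; [|apply MS_compl, MS_True]. intros; simpl; tauto.
Qed.

Lemma MS_or A B : MS A -> MS B -> MS (fun w => A w \/ B w).
Proof.
  intros HA HB.
  apply MS_ext with (A := fun w => exists n, (match n with O => A | _ => B end) w).
  - intros w _. split.
    + intros [[|n] Hn]; auto.
    + intros [H|H]; [exists O|exists 1%nat]; auto.
  - apply MS_union. intros [|n]; auto.
Qed.

Lemma MS_and A B : MS A -> MS B -> MS (fun w => A w /\ B w).
Proof.
  intros HA HB.
  apply MS_ext with (A := fun w => ~ (~ A w \/ ~ B w)).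
  - intros w _. tauto.
  - apply MS_compl, MS_or; apply MS_compl; auto.
Qed.

Lemma MS_inter (A : nat -> (R -> R) -> Prop) :
  (forall n, MS (A n)) -> MS (fun w => forall n, A n w).
Proof.
  intros H.
  apply MS_ext with (A := fun w => ~ exists n, ~ A n w).
  - intros w _. split.
    + intros Hn n. apply NNPP. intro C. apply Hn. eauto.
    + intros Hn [n C]. auto.
  - apply MS_compl, MS_union. intro n; apply MS_compl; auto.
Qed.

Lemma MS_exZ (A : Z -> (R -> R) -> Prop) :
  (forall k, MS (A k)) -> MS (fun w => exists k, A k w).
Proof.
  intros H.
  apply MS_ext with (A := fun w => exists p : nat, exists q : nat, A (Z.of_nat p - Z.of_nat q)%Z w).
  - intros w _. split.
    + intros [p [q Hq]]. eauto.
    + intros [k Hk]. exists (Z.to_nat k), (Z.to_nat (- k)).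
      replace (Z.of_nat (Z.to_nat k) - Z.of_nat (Z.to_nat (- k)))%Z with k by lia. auto.
  - apply MS_union; intro p; apply MS_union; intro q; auto.
Qed.

Definition RM (f : (R -> R) -> R) : Prop :=
  forall c, MS (fun w => f w < c) /\ MS (fun w => c < f w).

Lemma RM_ext f g : (forall w, Omega w -> f w = g w) -> RM f -> RM g.
Proof.
  intros E H c. destruct (H c) as [H1 H2]. split.
  - eapply MS_ext; [|exact H1]. intros w Hw; cbv beta; rewrite (E w Hw); tauto.
  - eapply MS_ext; [|exact H2]. intros w Hw; cbv beta; rewrite (E w Hw); tauto.
Qed.

Lemma RM_eval t : RM (fun w => w t).
Proof.
  intro c; split.
  - exists (fun w => (fun x => x < c) (w t)); split; [apply (cyl_gen t (fun x => x < c)); apply open_lt|tauto].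
  - exists (fun w => (fun x => c < x) (w t)); split; [apply (cyl_gen t (fun x => c < x)); apply open_gt|tauto].
Qed.

Lemma RM_const a : RM (fun _ => a).
Proof. intro c; split; apply MS_const. Qed.

Lemma RM_scal a f : RM f -> RM (fun w => a * f w).
Proof.
  intros H c. destruct (Rtotal_order a 0) as [Ha|[Ha|Ha]].
  - destruct (H (c / a)) as [H1 H2]. assert (E : a * (c/a) = c) by (field; lra). split.
    + eapply MS_ext; [|exact H2]. intros w _. split; intro h; nra.
    + eapply MS_ext; [|exact H1]. intros w _. split; intro h; nra.
  - subst a. split; [eapply MS_ext; [|apply (MS_const (0 < c))]|eapply MS_ext; [|apply (MS_const (c < 0))]];
      intros w _; rewrite Rmult_0_l; tauto.
  - destruct (H (c / a)) as [H1 H2]. assert (E : a * (c/a) = c) by (field; lra). split.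
    + eapply MS_ext; [|exact H1]. intros w _. split; intro h; nra.
    + eapply MS_ext; [|exact H2]. intros w _. split; intro h; nra.
Qed.

Lemma small_inv eps : 0 < eps -> exists k : nat, / (INR k + 1) < eps.
Proof.
  intros He. destruct (archimed_cor1 eps He) as [N [HN HN0]].
  exists N. eapply Rle_lt_trans; [|exact HN].
  apply Rinv_le_contravar; [apply lt_0_INR; lia|lra].
Qed.

Lemma rat_dense x y : x < y -> exists r : nat, exists k : Z,
  x < IZR k / (INR r + 1) < y.
Proof.
  intros Hxy. destruct (small_inv (y - x)) as [r Hr]; [lra|].
  exists r, (up (x * (INR r + 1))).
  assert (HN : 0 < INR r + 1) by (pose proof (pos_INR r); lra).
  destruct (archimed (x * (INR r + 1))) as [A1 A2].
  split.
  - apply (Rmult_lt_reg_r (INR r + 1)); [lra|]. unfold Rdiv.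
    rewrite Rmult_assoc, Rinv_l; lra.
  - apply (Rmult_lt_reg_r (INR r + 1)); [lra|]. unfold Rdiv.
    rewrite Rmult_assoc, Rinv_l by lra.
    assert (1 < (y - x) * (INR r + 1)).
    { apply (Rmult_lt_reg_r (/ (INR r + 1))); [apply Rinv_0_lt_compat; lra|].
      rewrite Rmult_assoc, Rinv_r, Rmult_1_l, Rmult_1_r by lra. lra. }
    nra.
Qed.

Lemma RM_plus_lt f g : (forall c, MS (fun w => f w < c)) -> (forall c, MS (fun w => g w < c)) ->
  forall c, MS (fun w => f w + g w < c).
Proof.
  intros Hf Hg c.
  apply MS_ext with (A := fun w => exists r : nat, exists k : Z,
     f w < IZR k / (INR r + 1) /\ g w < c - IZR k / (INR r + 1)).
  - intros w _. split.
    + intros [r [k [h1 h2]]]. lra.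
    + intro h. destruct (rat_dense (f w) (c - g w)) as [r [k Hk]]; [lra|].
      exists r, k. lra.
  - apply MS_union; intro r; apply MS_exZ; intro k. apply MS_and; auto.
Qed.

Lemma RM_opp f : RM f -> RM (fun w => - f w).
Proof.
  intro H. apply RM_ext with (f := fun w => -1 * f w).
  - intros; ring.
  - apply RM_scal; auto.
Qed.

Lemma RM_plus f g : RM f -> RM g -> RM (fun w => f w + g w).
Proof.
  intros Hf Hg c. split.
  - apply RM_plus_lt; intro d; [apply Hf|apply Hg].
  - assert (Hf' := RM_opp f Hf). assert (Hg' := RM_opp g Hg).
    eapply MS_ext; [|apply (RM_plus_lt (fun w => - f w) (fun w => - g w)) with (c := - c)].
    + intros w _; simpl; lra.
    + intro d; apply Hf'.
    + intro d; apply Hg'.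
Qed.

Lemma RM_lim_lt (f : nat -> (R -> R) -> R) g :
  (forall n c, MS (fun w => f n w < c)) ->
  (forall w, Omega w -> forall eps, 0 < eps -> exists N, forall n, (N <= n)%nat -> Rabs (f n w - g w) < eps) ->
  forall c, MS (fun w => g w < c).
Proof.
  intros Hf Hc c.
  apply MS_ext with (A := fun w => exists k : nat, exists N : nat, forall n,
     (N <= n)%nat \/ True -> ((N <= n)%nat -> f n w < c - / (INR k + 1))).
  - intros w Hw. split.
    + intros [k [N HN]].
      assert (Hk : 0 < / (INR k + 1)) by (apply Rinv_0_lt_compat; pose proof (pos_INR k); lra).
      destruct (Hc w Hw _ Hk) as [M HM].
      specialize (HN (max N M) (or_intror I) ltac:(lia)).
      specialize (HM (max N M) ltac:(lia)). apply Rabs_def2 in HM. lra.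
    + intro h. destruct (small_inv ((c - g w) / 2)) as [k Hk]; [lra|].
      assert (Hk0 : 0 < / (INR k + 1)) by (apply Rinv_0_lt_compat; pose proof (pos_INR k); lra).
      destruct (Hc w Hw _ Hk0) as [N HN]. exists k, N. intros n _ Hn.
      specialize (HN n Hn). apply Rabs_def2 in HN. lra.
  - apply MS_union; intro k; apply MS_union; intro N; apply MS_inter; intro n.
    destruct (Compare_dec.le_dec N n) as [h|h].
    + eapply MS_ext; [|apply (Hf n (c - / (INR k + 1)))]. intros; split; auto.
    + eapply MS_ext; [|apply MS_True]. intros; split; auto. intros _ h'. lia.
Qed.

Lemma RM_lim (f : nat -> (R -> R) -> R) g :
  (forall n, RM (f n)) ->
  (forall w, Omega w -> forall eps, 0 < eps -> exists N, forall n, (N <= n)%nat -> Rabs (f n w - g w) < eps) ->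
  RM g.
Proof.
  intros Hf Hc c. split.
  - apply (RM_lim_lt f); auto. intros n d; apply Hf.
  - eapply MS_ext; [|apply (RM_lim_lt (fun n w => - f n w) (fun w => - g w)) with (c := - c)].
    + intros w _; simpl; lra.
    + intros n d. apply (RM_opp _ (Hf n)).
    + intros w Hw eps He. destruct (Hc w Hw eps He) as [N HN]. exists N. intros n Hn.
      replace (- f n w - - g w) with (- (f n w - g w)) by ring. rewrite Rabs_Ropp. auto.
Qed.

Definition fint (mu : R) (w : R -> R) := fun t => exp (mu * t) * w t.

Lemma RS_meas mu ptd : RM (fun w => Riemann_sum (fint mu w) ptd).
Proof.
  induction ptd as [x0|h s IH] using SF_cons_ind.
  - apply RM_ext with (f := fun _ => 0); [intros; reflexivity|apply RM_const].
  - apply RM_ext with (f := fun w => (SF_h s - fst h) * (exp (mu * snd h) * w (snd h)) + Riemann_sum (fint mu w) s).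
    + intros w _. rewrite Riemann_sum_cons. reflexivity.
    + apply RM_plus; auto. apply RM_scal, RM_scal, RM_eval.
Qed.

Lemma ball_R (x y eps : R) : ball x eps y -> Rabs (y - x) < eps.
Proof. intro H. exact H. Qed.

Lemma fint_cont mu w : Omega w -> forall t, continuous (fint mu w) t.
Proof.
  intros [Hc _] t. unfold fint.
  apply (continuous_mult (fun t => exp (mu * t)) w).
  - apply (@ex_derive_continuous R_AbsRing R_NormedModule). auto_derive. auto.
  - apply Hc.
Qed.

Lemma RInt_meas mu a b : a < b -> RM (fun w => RInt (fint mu w) a b).
Proof.
  intros Hab.
  apply RM_lim with (f := fun m w => Riemann_sum (fint mu w) (SF_seq_f2 (fun x y => y) (unif_part a b m))).
  - intro m; apply RS_meas.
  - intros w Hw eps He.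
    assert (Hi : is_RInt (fint mu w) a b (RInt (fint mu w) a b)).
    { apply (@RInt_correct R_CompleteNormedModule), (@ex_RInt_continuous R_CompleteNormedModule). intros; apply fint_cont; auto. }
    destruct (Hi (ball (RInt (fint mu w) a b) (mkposreal eps He)) (locally_ball _ _)) as [delta Hd].
    destruct (small_inv (delta / (b - a))) as [N HN].
    { apply Rdiv_lt_0_compat; [apply cond_pos|lra]. }
    exists N. intros m Hm.
    destruct (Riemann_fine_unif_part (fun x y => y) a b m) as [S1 [S2 [S3 S4]]].
    { intros; lra. } { lra. }
    assert (Hm' : / (INR m + 1) <= / (INR N + 1)).
    { apply Rinv_le_contravar; [pose proof (pos_INR N); lra|]. apply le_INR in Hm. lra. }
    specialize (Hd (SF_seq_f2 (fun x y => y) (unif_part a b m))).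
    assert (Hstep : seq_step (SF_lx (SF_seq_f2 (fun x y : R => y) (unif_part a b m))) < delta).
    { eapply Rle_lt_trans; [exact S1|]. unfold Rdiv.
      apply Rle_lt_trans with ((b - a) * / (INR N + 1)).
      - apply Rmult_le_compat_l; lra.
      - apply (Rmult_lt_reg_l (/ (b - a))); [apply Rinv_0_lt_compat; lra|].
        rewrite <- Rmult_assoc, Rinv_l, Rmult_1_l by lra. unfold Rdiv in HN. lra. }
    specialize (Hd Hstep).
    rewrite Rmin_left, Rmax_right in Hd by lra.
    specialize (Hd (conj S2 (conj S3 S4))).
    apply ball_R in Hd. simpl in Hd.
    change (scal (sign (b - a)) (Riemann_sum (fint mu w) (SF_seq_f2 (fun x y : R => y) (unif_part a b m))))
      with (sign (b - a) * Riemann_sum (fint mu w) (SF_seq_f2 (fun x y : R => y) (unif_part a b m))) in Hd.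
    rewrite sign_eq_1, Rmult_1_l in Hd by lra. exact Hd.
Qed.

Lemma exp_le x y : x <= y -> exp x <= exp y.
Proof. intros [H|H]; [left; apply exp_increasing; auto|subst; lra]. Qed.

Lemma nat_big M : exists N : nat, M < INR N.
Proof.
  destruct (small_inv (/ (Rabs M + 1))) as [k Hk].
  { apply Rinv_0_lt_compat. pose proof (Rabs_pos M); lra. }
  exists k. pose proof (Rabs_pos M). pose proof (pos_INR k).
  apply Rinv_lt_contravar in Hk; [|apply Rmult_lt_0_compat; apply Rinv_0_lt_compat; lra].
  rewrite !Rinv_inv in Hk. pose proof (Rle_abs M). lra.
Qed.

Lemma w_bound mu w : 0 < mu -> Omega w ->
  exists C, 0 <= C /\ forall t, t <= 0 -> Rabs (w t) <= C * exp (-(mu/2) * t).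
Proof.
  intros Hmu Hw. destruct Hw as [Hc [H0 [Hp Hm]]].
  destruct (Hm (ball 0 (mkposreal 1 Rlt_0_1)) (locally_ball _ _)) as [M HM].
  set (M' := Rmin M (-1)).
  destruct (continuity_ab_maj (fun t => Rabs (w t)) M' 0) as [Mx [HMx1 HMx2]].
  { unfold M'. pose proof (Rmin_r M (-1)). lra. }
  { intros c _. apply continuity_pt_filterlim. apply (continuous_Rabs_comp w). apply Hc. }
  set (B := Rabs (w Mx)). assert (HB : 0 <= B) by apply Rabs_pos.
  exists (B + 2 / mu). split.
  { assert (0 < 2 / mu) by (apply Rdiv_lt_0_compat; lra). lra. }
  intros t Ht.
  assert (He : 1 + (-(mu/2) * t) <= exp (-(mu/2) * t)) by apply exp_ineq1_le.
  assert (Hx : 0 <= -(mu/2) * t) by nra.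
  destruct (Rle_lt_dec M' t) as [h|h].
  - specialize (HMx1 t (conj h Ht)). simpl in HMx1. fold B in HMx1.
    assert (0 < 2 / mu) by (apply Rdiv_lt_0_compat; lra). nra.
  - assert (htM : t < M) by (unfold M' in h; pose proof (Rmin_l M (-1)); lra).
    assert (ht1 : t < -1) by (unfold M' in h; pose proof (Rmin_r M (-1)); lra).
    specialize (HM t htM). apply ball_R in HM. simpl in HM. rewrite Rminus_0_r in HM.
    rewrite Rabs_div in HM by lra. rewrite (Rabs_left t) in HM by lra.
    assert (Hwt : Rabs (w t) < - t).
    { apply (Rmult_lt_reg_r (/ - t)); [apply Rinv_0_lt_compat; lra|].
      rewrite Rinv_r by lra. exact HM. }
    assert (E : 2 / mu * (-(mu/2) * t) = - t) by (field; lra).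
    assert (0 < 2 / mu) by (apply Rdiv_lt_0_compat; lra).
    assert (0 < exp (-(mu/2) * t)) by apply exp_pos.
    nra.
Qed.

Lemma fint_exRInt mu w a b : Omega w -> ex_RInt (fint mu w) a b.
Proof.
  intro Hw. apply (@ex_RInt_continuous R_CompleteNormedModule). intros; apply fint_cont; auto.
Qed.

Lemma int_bound mu w C a b : 0 < mu -> Omega w -> 0 <= C ->
  (forall t, t <= 0 -> Rabs (w t) <= C * exp (-(mu/2) * t)) ->
  a <= b -> b <= 0 ->
  Rabs (RInt (fint mu w) a b) <= 2 * C / mu * exp (mu / 2 * b).
Proof.
  intros Hmu Hw HC HCb Hab Hb0.
  set (G := fun t => 2 * C / mu * exp (mu / 2 * t)).
  assert (HG : is_RInt (fun t => C * exp (mu / 2 * t)) a b (minus (G b) (G a))).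
  { apply (@is_RInt_derive R_CompleteNormedModule).
    - intros x _. unfold G. auto_derive; auto. field. lra.
    - intros x _. apply (@ex_derive_continuous R_AbsRing R_NormedModule). auto_derive. auto. }
  assert (Hn := norm_RInt_le (fint mu w) (fun t => C * exp (mu / 2 * t)) a b
     (RInt (fint mu w) a b) (minus (G b) (G a)) Hab).
  assert (Hle : Rabs (RInt (fint mu w) a b) <= G b - G a).
  { apply Hn.
    - intros x Hx. change (Rabs (fint mu w x) <= C * exp (mu / 2 * x)).
      unfold fint. rewrite Rabs_mult, (Rabs_right (exp _)) by (left; apply exp_pos).
      assert (E : exp (mu * x) * exp (-(mu/2) * x) = exp (mu / 2 * x)).
      { rewrite <- exp_plus. f_equal. field. }
      specialize (HCb x ltac:(lra)).
      assert (0 < exp (mu * x)) by apply exp_pos. nra.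
    - apply (@RInt_correct R_CompleteNormedModule). apply fint_exRInt; auto.
    - exact HG. }
  assert (0 <= G a) by (unfold G; apply Rmult_le_pos; [apply Rmult_le_pos; [lra|left; apply Rinv_0_lt_compat; lra]|left; apply exp_pos]).
  unfold G in *. lra.
Qed.

Lemma fint_chasles mu w a b c : Omega w ->
  RInt (fint mu w) a b + RInt (fint mu w) b c = RInt (fint mu w) a c.
Proof.
  intro Hw. apply (@RInt_Chasles R_CompleteNormedModule); apply fint_exRInt; auto.
Qed.

Lemma fint_swap mu w a b : Omega w -> RInt (fint mu w) b a = - RInt (fint mu w) a b.
Proof.
  intro Hw. rewrite <- (@opp_RInt_swap R_CompleteNormedModule); [reflexivity|]. apply fint_exRInt; auto.
Qed.

Lemma zOU_limit mu w : 0 < mu -> Omega w ->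
  exists l, zOU mu w = - mu * l /\
    forall eps, 0 < eps -> exists N, forall n, (N <= n)%nat ->
      Rabs (RInt (fint mu w) (-(INR n + 1)) 0 - l) < eps.
Proof.
  intros Hmu Hw.
  destruct (w_bound mu w Hmu Hw) as [C [HC HCb]].
  assert (Hcau : exists l, filterlim (fun a => RInt (fint mu w) a 0) (Rbar_locally m_infty) (locally l)).
  { apply (@filterlim_locally_cauchy R R_CompleteSpace (Rbar_locally m_infty) (Rbar_locally_filter _)).
    intros [eps He]. simpl.
    set (y := eps * mu / (2 * C + 1)).
    assert (Hy : 0 < y) by (unfold y; apply Rdiv_lt_0_compat; [nra|lra]).
    set (M0 := Rmin 0 (2 / mu * ln y)).
    assert (HM0 : forall x, x <= M0 -> 2 * C / mu * exp (mu / 2 * x) < eps).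
    { intros x Hx.
      assert (h1 : mu / 2 * x <= ln y).
      { unfold M0 in Hx. pose proof (Rmin_r 0 (2 / mu * ln y)).
        assert (E : mu / 2 * (2 / mu * ln y) = ln y) by (field; lra). nra. }
      apply exp_le in h1. rewrite exp_ln in h1 by auto.
      assert (E2 : 2 * C / mu * y = 2 * C * eps / (2 * C + 1)) by (unfold y; field; lra).
      assert (0 <= 2 * C / mu) by (apply Rmult_le_pos; [lra|left; apply Rinv_0_lt_compat; lra]).
      assert (2 * C / mu * exp (mu / 2 * x) <= 2 * C * eps / (2 * C + 1)) by nra.
      assert (2 * C * eps / (2 * C + 1) < eps).
      { apply (Rmult_lt_reg_r (2 * C + 1)); [lra|]. unfold Rdiv.
        rewrite Rmult_assoc, Rinv_l by lra. nra. }
      lra. }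
    exists (fun a => a < M0). split.
    - exists M0. auto.
    - intros u v Hu Hv. change (Rabs (RInt (fint mu w) v 0 - RInt (fint mu w) u 0) < eps).
      rewrite <- (fint_chasles mu w v u 0 Hw).
      unfold Rminus; rewrite Rplus_assoc, Rplus_opp_r, Rplus_0_r.
      assert (M0 <= 0) by apply Rmin_l.
      destruct (Rle_dec v u) as [h|h].
      + eapply Rle_lt_trans; [apply (int_bound mu w C); auto; lra|]. apply HM0; lra.
      + rewrite fint_swap, Rabs_Ropp by auto.
        eapply Rle_lt_trans; [apply (int_bound mu w C); auto; lra|]. apply HM0; lra. }
  destruct Hcau as [l Hl].
  exists l. split.
  - unfold zOU. f_equal.
    apply (@is_RInt_gen_unique R_CompleteNormedModule).
    { apply Proper_StrongProper, Rbar_locally_filter. }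
    { apply Proper_StrongProper, (@at_point_filter R_UniformSpace). }
    intros P HP. specialize (Hl P HP).
    apply Filter_prod with (Q := fun a => P (RInt (fint mu w) a 0)) (R := fun b => b = 0).
    + exact Hl.
    + reflexivity.
    + intros x y Hx Hy. simpl. subst y. exists (RInt (fint mu w) x 0). split; auto.
      apply (@RInt_correct R_CompleteNormedModule). apply fint_exRInt; auto.
  - intros eps He.
    destruct (Hl (ball l (mkposreal eps He)) (locally_ball _ _)) as [M HM].
    destruct (nat_big (- M)) as [N HN]. exists N. intros n Hn.
    apply le_INR in Hn.
    specialize (HM (-(INR n + 1)) ltac:(lra)). apply ball_R in HM. exact HM.
Qed.

Lemma zOU_meas mu : 0 < mu -> RM (zOU mu).
Proof.
  intro Hmu.
  apply RM_ext with (f := fun w => - mu * (zOU mu w / (- mu))).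
  { intros; field; lra. }
  apply RM_scal.
  apply RM_lim with (f := fun n w => RInt (fint mu w) (-(INR n + 1)) 0).
  - intro n. apply RInt_meas. pose proof (pos_INR n); lra.
  - intros w Hw eps He. destruct (zOU_limit mu w Hmu Hw) as [l [El Hl]].
    rewrite El. replace (- mu * l / - mu) with l by (field; lra). auto.
Qed.

Definition HM {H : NormedModule R_AbsRing} (f : (R -> R) -> H) : Prop :=
  forall U : H -> Prop, open U -> MS (fun w => U (f w)).

Section HS.
Context {H : NormedModule R_AbsRing}.

Lemma norm_ball_open (U : H -> Prop) x : open U -> U x ->
  exists eps, 0 < eps /\ forall y, norm (minus y x) < eps -> U y.
Proof.
  intros HU Hx. destruct (HU x Hx) as [eps He]. exists eps. split; [apply cond_pos|].
  intros y Hy. apply He, norm_compat1; auto.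
Qed.

Lemma open_norm (V : H -> Prop) :
  (forall x, V x -> exists d, 0 < d /\ forall y, norm (minus y x) < d -> V y) -> open V.
Proof.
  intros HV x Vx. destruct (HV x Vx) as [d [Hd Hy]].
  assert (Hnf : 0 < @norm_factor _ H) by apply norm_factor_gt_0.
  exists (mkposreal (d / @norm_factor _ H) (Rdiv_lt_0_compat _ _ Hd Hnf)).
  intros y Hb. apply Hy. apply norm_compat2 in Hb. simpl in Hb.
  replace (norm_factor * (d / norm_factor)) with d in Hb by (field; lra). exact Hb.
Qed.

Lemma norm_tri3 (a b c : H) : norm (minus a c) <= norm (minus a b) + norm (minus b c).
Proof. rewrite (minus_trans b). apply norm_triangle. Qed.

Lemma norm_minus_sym (a b : H) : norm (minus a b) = norm (minus b a).
Proof. rewrite <- opp_minus, norm_opp. reflexivity. Qed.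

Lemma HM_lim (f : nat -> (R -> R) -> H) g :
  (forall n, HM (f n)) ->
  (forall w, Omega w -> forall eps, 0 < eps -> exists N, forall n, (N <= n)%nat ->
     norm (minus (f n w) (g w)) < eps) ->
  HM g.
Proof.
  intros Hf Hc U HU.
  set (V := fun (k : nat) x => exists d, 0 < d /\ forall y, norm (minus y x) < / (INR k + 1) + d -> U y).
  assert (HV : forall k, open (V k)).
  { intro k. apply open_norm. intros x [d [Hd Hy]]. exists (d / 2). split; [lra|].
    intros x' Hx'. exists (d / 2). split; [lra|]. intros y Hy'. apply Hy.
    pose proof (norm_tri3 y x' x). lra. }
  apply MS_ext with (A := fun w => exists k : nat, exists N : nat, forall n,
     (N <= n)%nat -> V k (f n w)).
  - intros w Hw. split.
    + intros [k [N HN]].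
      assert (Hk : 0 < / (INR k + 1)) by (apply Rinv_0_lt_compat; pose proof (pos_INR k); lra).
      destruct (Hc w Hw _ Hk) as [M HM].
      destruct (HN (max N M) ltac:(lia)) as [d [Hd Hy]].
      apply Hy. rewrite norm_minus_sym. specialize (HM (max N M) ltac:(lia)). lra.
    + intro h. destruct (norm_ball_open U (g w) HU h) as [eps [He Hy]].
      destruct (small_inv (eps / 3)) as [k Hk]; [lra|].
      assert (Hk0 : 0 < / (INR k + 1)) by (apply Rinv_0_lt_compat; pose proof (pos_INR k); lra).
      destruct (Hc w Hw _ Hk0) as [N HN]. exists k, N. intros n Hn.
      exists (/ (INR k + 1)). split; auto. intros y Hy'. apply Hy.
      pose proof (norm_tri3 y (f n w) (g w)). specialize (HN n Hn). lra.
  - apply MS_union; intro k; apply MS_union; intro N; apply MS_inter; intro n.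
    destruct (Compare_dec.le_dec N n) as [h|h].
    + eapply MS_ext; [|apply (Hf n (V k) (HV k))]. intros; split; auto.
    + eapply MS_ext; [|apply MS_True]. intros; split; auto. intros _ h'. lia.
Qed.

Lemma scal_minus (a : R) (x y : H) : scal a (minus x y) = minus (scal a x) (scal a y).
Proof. unfold minus. etransitivity; [apply (@scal_distr_l R_Ring (NormedModule.ModuleSpace R_AbsRing H))|]. f_equal. apply (@scal_opp_r R_Ring (NormedModule.ModuleSpace R_AbsRing H)). Qed.

Lemma scal_open (U : H -> Prop) (a : R) : open U -> open (fun x : H => U (scal a x)).
Proof.
  intros HU. apply open_norm. intros x Hx.
  destruct (norm_ball_open U _ HU Hx) as [eps [He Hy]].
  exists (eps / (Rabs a + 1)). split.
  { apply Rdiv_lt_0_compat; [lra|pose proof (Rabs_pos a); lra]. }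
  intros y Hy'. apply Hy. rewrite <- scal_minus.
  eapply Rle_lt_trans; [apply (@norm_scal R_AbsRing H)|]. change (abs a) with (Rabs a).
  pose proof (Rabs_pos a). pose proof (norm_ge_0 (minus y x)).
  assert (E : (Rabs a + 1) * (eps / (Rabs a + 1)) = eps) by (field; lra).
  nra.
Qed.

Lemma mod_id (a b : R) (x y : H) :
  minus (scal b x) (scal a y) = plus (scal (b - a) x) (scal a (minus x y)).
Proof.
  assert (E1 : scal (b - a) x = minus (scal b x) (scal a x)).
  { unfold minus. etransitivity; [apply (@scal_distr_r R_Ring (NormedModule.ModuleSpace R_AbsRing H) b (opp a) x)|].
    f_equal. apply (@scal_opp_l R_Ring (NormedModule.ModuleSpace R_AbsRing H)). }
  rewrite E1, scal_minus. apply (@minus_trans (NormedModule.AbelianGroup R_AbsRing H)).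
Qed.

End HS.

Lemma RM_mulr f a : RM f -> RM (fun w => f w * a).
Proof. intro H. apply RM_ext with (f := fun w => a * f w); [intros; ring|apply RM_scal; auto]. Qed.

Lemma scal_comp_meas {H : NormedModule R_AbsRing} (z : (R -> R) -> R)
  (phi : R -> (R -> R) -> H) (K0 : (R -> R) -> R) :
  RM z -> (forall a, HM (phi a)) ->
  (forall w, Omega w -> 0 <= K0 w) ->
  (forall w, Omega w -> forall a b, norm (minus (phi a w) (phi b w)) <= K0 w * Rabs (a - b)) ->
  (forall w, Omega w -> forall a, norm (phi a w) <= K0 w * Rabs a) ->
  HM (fun w => scal (exp (z w)) (phi (exp (- z w)) w)).
Proof.
  intros Hz Hphi HK0 Hlip Hbd.
  set (c := fun n w => IZR (up (z w * (INR n + 1))) / (INR n + 1)).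
  apply HM_lim with (f := fun n w => scal (exp (c n w)) (phi (exp (- c n w)) w)).
  - intros n U HU. set (N := INR n + 1).
    assert (HN : 0 < N) by (unfold N; pose proof (pos_INR n); lra).
    apply MS_ext with (A := fun w => exists k : Z,
       (~ (z w * N < IZR k - 1) /\ z w * N < IZR k) /\
       U (scal (exp (IZR k / N)) (phi (exp (- (IZR k / N))) w))).
    + intros w _. split.
      * intros [k [[h1 h2] h3]].
        assert (Ek : k = up (z w * N)) by (apply tech_up; lra).
        unfold c. fold N. rewrite <- Ek. exact h3.
      * intro h. exists (up (z w * N)). destruct (archimed (z w * N)).
        split; [split; lra|exact h].
    + apply MS_exZ; intro k. apply MS_and; [apply MS_and|].
      * apply MS_compl. apply (RM_mulr z N Hz).
      * apply (RM_mulr z N Hz).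
      * apply (Hphi (exp (- (IZR k / N))) (fun x => U (scal (exp (IZR k / N)) x))).
        apply scal_open; auto.
  - intros w Hw eps He.
    assert (HK := HK0 w Hw).
    destruct (small_inv (eps / (2 * K0 w + 1))) as [n0 Hn0].
    { apply Rdiv_lt_0_compat; lra. }
    exists n0. intros n Hn.
    set (N := INR n + 1).
    assert (HN : 0 < N) by (unfold N; pose proof (pos_INR n); lra).
    set (zz := z w). set (cc := c n w).
    assert (Hcc : zz < cc /\ cc <= zz + / N).
    { unfold cc, c. fold N. fold zz. destruct (archimed (zz * N)) as [a1 a2].
      split.
      - apply (Rmult_lt_reg_r N); auto. unfold Rdiv. rewrite Rmult_assoc, Rinv_l; lra.
      - apply (Rmult_le_reg_r N); auto. unfold Rdiv. rewrite Rmult_assoc, Rinv_l by lra.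
        rewrite Rmult_plus_distr_r, Rinv_l; lra. }
    set (d := cc - zz).
    assert (Hd : 0 < d /\ d < eps / (2 * K0 w + 1)).
    { split; [unfold d; lra|].
      assert (/ N <= / (INR n0 + 1)).
      { apply Rinv_le_contravar; [pose proof (pos_INR n0); lra|]. unfold N. apply le_INR in Hn. lra. }
      unfold d; lra. }
    set (A := exp zz). set (Ai := exp (- zz)). set (E := exp d). set (Ei := exp (- d)).
    assert (HAA : A * Ai = 1) by (unfold A, Ai; rewrite <- exp_plus, Rplus_opp_r; apply exp_0).
    assert (HEE : E * Ei = 1) by (unfold E, Ei; rewrite <- exp_plus, Rplus_opp_r; apply exp_0).
    assert (HA : 0 < A) by apply exp_pos. assert (HAi : 0 < Ai) by apply exp_pos.
    assert (HEi : 0 < Ei) by apply exp_pos.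
    assert (HEi1 : 1 - d <= Ei) by (unfold Ei; pose proof (exp_ineq1_le (- d)); lra).
    assert (HE1 : 1 <= E) by (unfold E; pose proof (exp_ineq1_le d); lra).
    assert (Ec : exp cc = A * E) by (unfold A, E, d; rewrite <- exp_plus; f_equal; ring).
    assert (Ec' : exp (- cc) = Ai * Ei) by (unfold Ai, Ei, d; rewrite <- exp_plus; f_equal; ring).
    change (norm (minus (scal (exp cc) (phi (exp (- cc)) w)) (scal (exp zz) (phi (exp (- zz)) w))) < eps).
    fold A Ai. rewrite Ec, Ec'.
    rewrite mod_id.
    eapply Rle_lt_trans; [apply (@norm_triangle R_AbsRing H)|].
    assert (T1 : norm (scal (A * E - A) (phi (Ai * Ei) w)) <= K0 w * (1 - Ei)).
    { eapply Rle_trans; [apply (@norm_scal R_AbsRing H)|]. change (abs (A * E - A)) with (Rabs (A * E - A)).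
      rewrite Rabs_right by nra.
      assert (B1 := Hbd w Hw (Ai * Ei)). rewrite Rabs_right in B1 by nra.
      assert (E1 : (A * E - A) * (K0 w * (Ai * Ei)) = K0 w * (1 - Ei)).
      { replace ((A * E - A) * (K0 w * (Ai * Ei))) with (K0 w * ((A * Ai) * (E * Ei)) - K0 w * (A * Ai) * Ei) by ring.
        rewrite HAA, HEE. ring. }
      rewrite <- E1. apply Rmult_le_compat_l; [nra|exact B1]. }
    assert (T2 : norm (scal A (minus (phi (Ai * Ei) w) (phi Ai w))) <= K0 w * (1 - Ei)).
    { eapply Rle_trans; [apply (@norm_scal R_AbsRing H)|]. change (abs A) with (Rabs A).
      rewrite Rabs_right by lra.
      assert (B1 := Hlip w Hw (Ai * Ei) Ai).
      assert (Ei <= 1) by nra.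
      rewrite Rabs_left1 in B1 by nra.
      assert (E1 : A * (K0 w * - (Ai * Ei - Ai)) = K0 w * (1 - Ei)).
      { replace (A * (K0 w * - (Ai * Ei - Ai))) with (K0 w * (A * Ai) - K0 w * (A * Ai) * Ei) by ring.
        rewrite HAA. ring. }
      rewrite <- E1. apply Rmult_le_compat_l; [lra|exact B1]. }
    assert (H3 : K0 w * (1 - Ei) <= K0 w * d) by (apply Rmult_le_compat_l; lra).
    assert (H4 : d * (2 * K0 w + 1) < eps).
    { destruct Hd as [_ Hd]. apply (Rmult_lt_compat_r (2 * K0 w + 1)) in Hd; [|lra].
      unfold Rdiv in Hd. rewrite Rmult_assoc, Rinv_l, Rmult_1_r in Hd by lra. exact Hd. }
    nra.
Qed.

Section HS2.
Context {H : NormedModule R_AbsRing}.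

Lemma scal_exp_K a (x : H) : scal (exp a) (scal (exp (- a)) x) = x.
Proof.
  rewrite (@scal_assoc R_Ring (NormedModule.ModuleSpace R_AbsRing H)).
  replace (mult (exp a) (exp (- a))) with (@one R_Ring).
  - apply (@scal_one R_Ring (NormedModule.ModuleSpace R_AbsRing H)).
  - change (1 = exp a * exp (- a)). rewrite <- exp_plus, Rplus_opp_r, exp_0. reflexivity.
Qed.

Lemma scal_exp_K' a (x : H) : scal (exp (- a)) (scal (exp a) x) = x.
Proof.
  rewrite <- (Ropp_involutive a) at 2. apply scal_exp_K.
Qed.

Lemma scal_minus_l (a b : R) (x : H) : minus (scal a x) (scal b x) = scal (a - b) x.
Proof.
  unfold minus. symmetry. etransitivity; [apply (@scal_distr_r R_Ring (NormedModule.ModuleSpace R_AbsRing H) a (opp b) x)|].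
  f_equal. apply (@scal_opp_l R_Ring (NormedModule.ModuleSpace R_AbsRing H)).
Qed.

Lemma scal_zero (a : R) : scal a (@zero H) = zero.
Proof. apply (@scal_zero_r R_Ring (NormedModule.ModuleSpace R_AbsRing H)). Qed.

Lemma scal_zero' (x : H) : scal 0 x = zero.
Proof. apply (@scal_zero_l R_Ring (NormedModule.ModuleSpace R_AbsRing H)). Qed.

Lemma scal_plus (a : R) (x y : H) : scal a (plus x y) = plus (scal a x) (scal a y).
Proof. apply (@scal_distr_l R_Ring (NormedModule.ModuleSpace R_AbsRing H)). Qed.

Lemma norm_scal_R (a : R) (x : H) : norm (scal a x) <= Rabs a * norm x.
Proof. apply (@norm_scal R_AbsRing H). Qed.

Lemma minus_zero (x : H) : minus x zero = x.
Proof. apply (@minus_zero_r (NormedModule.AbelianGroup R_AbsRing H)). Qed.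

End HS2.

Section HS3.
Context {H : CompleteNormedModule R_AbsRing}.
Lemma scal_exp_KC a (x : H) : scal (exp a) (scal (exp (- a)) x) = x.
Proof. exact (@scal_exp_K H a x). Qed.
Lemma scal_exp_KC' a (x : H) : scal (exp (- a)) (scal (exp a) x) = x.
Proof. exact (@scal_exp_K' H a x). Qed.
Lemma scal_minus_lC (a b : R) (x : H) : minus (scal a x) (scal b x) = scal (a - b) x.
Proof. exact (@scal_minus_l H a b x). Qed.
Lemma scal_zeroC (a : R) : scal a (@zero H) = zero.
Proof. exact (@scal_zero H a). Qed.
Lemma scal_zeroC' (x : H) : scal 0 x = zero.
Proof. exact (@scal_zero' H x). Qed.
Lemma scal_plusC (a : R) (x y : H) : scal a (plus x y) = plus (scal a x) (scal a y).
Proof. exact (@scal_plus H a x y). Qed.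
Lemma norm_scal_RC (a : R) (x : H) : norm (scal a x) <= Rabs a * norm x.
Proof. exact (@norm_scal_R H a x). Qed.
Lemma minus_zeroC (x : H) : minus x zero = x.
Proof. exact (@minus_zero H x). Qed.
Lemma scal_minusC (a : R) (x y : H) : scal a (minus x y) = minus (scal a x) (scal a y).
Proof. exact (@scal_minus H a x y). Qed.
End HS3.

Theorem theorem3p2
  (H : CompleteNormedModule R_AbsRing)
  (S : R -> H -> H) (Pc Pu Ps : H -> H) (alpha beta gamma K : R)
  (F : H -> H) (LF : R) (mu eta LipG : R)
  (u : R -> H -> (R -> R) -> H) (hc : H -> (R -> R) -> H) :
  @hilbert_norm H -> separable H ->
  C0_semigroup S ->
  exp_trichotomy S Pc Pu Ps alpha beta gamma K ->
  F zero = zero ->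
  (forall x y, norm (minus (F x) (F y)) <= LF * norm (minus x y)) ->
  0 < mu ->
  (* Lip_u G *)
  0 <= LipG ->
  (forall w x y, norm (minus (Gfun mu F w x) (Gfun mu F w y)) <= LipG * norm (minus x y)) ->
  gamma < eta -> eta < Rmin beta alpha ->
  K * LipG * (/ (eta - gamma) + / (beta - eta) + / (alpha - eta)) < 1 ->
  is_mild_solution S mu F u ->
  (* M^c(omega) = {u0 : u(.,u0,omega) in C_eta} = {v + h^c(v,omega)} is the center manifold *)
  center_manifold_with Pc u (Mc_eta S mu F eta) hc ->
  center_manifold_with Pc (hat_u mu u)
    (fun w x => exists y, Mc_eta S mu F eta w y /\ x = scal (exp (zOU mu w)) y)
    (fun v w => scal (exp (zOU mu w)) (hc (scal (exp (- zOU mu w)) v) w)).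
Proof.
  intros _ _ _ Htri _ _ Hmu _ _ _ _ _ _ Hcm.
  destruct Htri as [_ [_ [_ [[_ [Pscal _]] _]]]].
  destruct Hcm as [HM1 [HM2 [HM3 [HM4 [HM5 HM6]]]]].
  split; [|split; [|split; [|split; [|split]]]].
  - intros w Hw x. split.
    + intros [y [Hy ->]]. destruct (proj1 (HM1 w Hw y) Hy) as [v' [Pv' Ey]].
      exists (scal (exp (zOU mu w)) v'). split.
      * rewrite Pscal, Pv'. reflexivity.
      * rewrite scal_exp_KC', Ey. apply scal_plusC.
    + intros [v [Pv ->]]. exists (plus (scal (exp (- zOU mu w)) v) (hc (scal (exp (- zOU mu w)) v) w)).
      split.
      * apply (HM1 w Hw). exists (scal (exp (- zOU mu w)) v). split; [rewrite Pscal, Pv|]; reflexivity.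
      * symmetry. etransitivity; [apply scal_plusC|]. rewrite scal_exp_KC. reflexivity.
  - intros w Hw v Pv. rewrite Pscal, HM2; [apply scal_zeroC|auto|].
    rewrite Pscal, Pv. reflexivity.
  - intros w Hw. destruct (HM3 w Hw) as [L [HL Hlip]]. exists L. split; auto.
    intros v1 v2 P1 P2.
    set (e := exp (zOU mu w)). set (ei := exp (- zOU mu w)).
    assert (He : 0 < e) by apply exp_pos. assert (Hei : 0 < ei) by apply exp_pos.
    assert (Eee : e * ei = 1) by (unfold e, ei; rewrite <- exp_plus, Rplus_opp_r; apply exp_0).
    eapply Rle_trans; [right; apply (f_equal norm); symmetry; apply scal_minusC|].
    eapply Rle_trans; [apply norm_scal_RC|]. rewrite Rabs_right by lra.
    assert (B := Hlip (scal ei v1) (scal ei v2) ltac:(rewrite Pscal, P1; reflexivity) ltac:(rewrite Pscal, P2; reflexivity)).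
    assert (B' : norm (minus (hc (scal ei v1) w) (hc (scal ei v2) w)) <= L * norm (scal ei (minus v1 v2))).
    { eapply Rle_trans; [exact B|]. right. apply (f_equal (fun t => L * norm t)). symmetry. apply scal_minusC. }
    clear B.
    assert (B2 := norm_scal_RC ei (minus v1 v2)). rewrite Rabs_right in B2 by lra.
    assert (0 <= norm (minus v1 v2)) by apply norm_ge_0.
    assert (e * (L * (ei * norm (minus v1 v2))) = L * norm (minus v1 v2)).
    { replace (e * (L * (ei * norm (minus v1 v2)))) with ((e * ei) * (L * norm (minus v1 v2))) by ring.
      rewrite Eee. ring. }
    assert (L * norm (scal ei (minus v1 v2)) <= L * (ei * norm (minus v1 v2))) by (apply Rmult_le_compat_l; auto).
    nra.
  - intros w Hw. rewrite scal_zeroC, HM4 by auto. apply scal_zeroC.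
  - intros v Pv.
    assert (Hex : forall w, exists L, Omega w -> 0 <= L /\ forall v1 v2, Pc v1 = v1 -> Pc v2 = v2 ->
      norm (minus (hc v1 w) (hc v2 w)) <= L * norm (minus v1 v2)).
    { intro w. destruct (classic (Omega w)) as [Hw|Hw].
      - destruct (HM3 w Hw) as [L HL]. exists L. auto.
      - exists 0. intro; contradiction. }
    set (Lf := fun w => proj1_sig (constructive_indefinite_description _ (Hex w))).
    assert (HLf : forall w, Omega w -> 0 <= Lf w /\ forall v1 v2, Pc v1 = v1 -> Pc v2 = v2 ->
      norm (minus (hc v1 w) (hc v2 w)) <= Lf w * norm (minus v1 v2)).
    { intros w Hw. unfold Lf. destruct (constructive_indefinite_description _ (Hex w)) as [L HL]. simpl. auto. }
    assert (Psv : forall a, Pc (scal a v) = scal a v) by (intro a; rewrite Pscal, Pv; reflexivity).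
    assert (Hlip : forall w, Omega w -> forall a b,
      norm (minus (hc (scal a v) w) (hc (scal b v) w)) <= Lf w * norm v * Rabs (a - b)).
    { intros w Hw a b. destruct (HLf w Hw) as [HL0 HL].
      eapply Rle_trans; [apply HL; apply Psv|].
      eapply Rle_trans; [right; apply (f_equal (fun t => Lf w * norm t)); apply scal_minus_lC|].
      rewrite Rmult_assoc. apply Rmult_le_compat_l; auto.
      rewrite Rmult_comm. apply norm_scal_RC. }
    apply (scal_comp_meas (zOU mu) (fun a w => hc (scal a v) w) (fun w => Lf w * norm v)).
    + apply zOU_meas; auto.
    + intro a. apply HM5. apply Psv.
    + intros w Hw. apply Rmult_le_pos; [apply HLf; auto|apply norm_ge_0].
    + exact Hlip.
    + intros w Hw a. specialize (Hlip w Hw a 0). simpl in Hlip.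
      rewrite scal_zeroC', HM4, Rminus_0_r in Hlip by auto.
      eapply Rle_trans; [|exact Hlip]. right. apply (f_equal norm). symmetry. apply minus_zeroC.
  - intros w Hw t Ht x [y [Hy ->]]. exists (u t y w). split.
    + apply HM6; auto.
    + unfold hat_u. rewrite scal_exp_KC'. reflexivity.
Qed.
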